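(* Let $f$ be a $C^\infty$ function on $\mathbb R$ with no flat zero (for every $x$ with $f(x)=0$ there exists $r\in\mathbb N$ with $f^{(r)}(x)\neq0$), and let $a<b$ with $f(a)f(b)\neq0$. Then the number of zeros of $f$ in $[a,b]$ (counted without multiplicity) is finite and $$\mathcal H^0(\{f=0\}\cap[a,b])=\frac1\pi\Big[\arctan\frac{f'(b)}{f(b)}-\arctan\frac{f'(a)}{f(a)}+\int_a^b\frac{f'(x)^2-f(x)f''(x)}{f(x)^2+f'(x)^2}\,dx\Big].$$
   Context: $\mathcal H^0(\{f=0\}\cap[a,b])$ denotes the number of distinct zeros of $f$ in $[a,b]$. *)

(* Defs.v *)
From Stdlib Require Import Reals List.
From Coquelicot Require Import Coquelicot.
Open Scope R_scope.

Definition smooth (f : R -> R) : Prop :=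
  forall (n : nat) (x : R), ex_derive (Derive_n f n) x.

Definition no_flat_zero (f : R -> R) : Prop :=
  forall x : R, f x = 0 -> exists r : nat, Derive_n f r x <> 0.

Definition zero_count_integrand (f : R -> R) (x : R) : R :=
  (Derive_n f 1 x ^ 2 - f x * Derive_n f 2 x) / (f x ^ 2 + Derive_n f 1 x ^ 2).

(* Main.v *)
Require Import Defs.
From Stdlib Require Import Reals List Lra Lia Classical ClassicalEpsilon.
From Coquelicot Require Import Coquelicot.
Open Scope R_scope.

Lemma smooth_deriv f n x : smooth f -> is_derive (Derive_n f n) x (Derive_n f (S n) x).
Proof. intros Hs. apply Derive_correct. apply Hs. Qed.

Lemma smooth_cont f n x : smooth f -> continuity_pt (Derive_n f n) x.
Proof.
  intros Hs. apply continuity_pt_filterlim. exact (ex_derive_continuous (Derive_n f n) x (Hs n x)).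
Qed.

Lemma smooth_Dn f j : smooth f -> smooth (Derive_n f j).
Proof.
  intros Hs n x. apply ex_derive_ext with (f := Derive_n f (n + j)).
  - intros t. symmetry. apply Derive_n_comp.
  - apply Hs.
Qed.

Lemma smooth_exn f k t : smooth f -> ex_derive_n f k t.
Proof. intros Hs. destruct k; simpl; [exact I| apply Hs]. Qed.

Lemma smooth_opp f : smooth f -> smooth (fun y => f (- y)).
Proof.
  intros Hs n x.
  apply ex_derive_ext with (f := fun y => (-1) ^ n * Derive_n f n (- y)).
  - intros t. symmetry. apply Derive_n_comp_opp.
    apply filter_forall. intros y k _. apply smooth_exn; auto.
  - apply ex_derive_scal.
    apply (ex_derive_comp (Derive_n f n) (fun y => - y)).
    + apply Hs.
    + apply (ex_derive_opp (fun y : R => y)). apply ex_derive_id.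
Qed.

Lemma taylor_pos g m s x : smooth g -> (forall k, (k < m)%nat -> Derive_n g k s = 0) ->
  s < x -> exists z, s < z <= x /\ g x = (x - s) ^ m / INR (Factorial.fact m) * Derive_n g m z.
Proof.
  intros Hs H0 Hsx. destruct m as [|n].
  - exists x. split. lra. simpl. field.
  - destruct (Taylor_Lagrange g n s x Hsx) as [z [Hz Heq]].
    + intros t _ k _. apply smooth_exn; auto.
    + exists z. split. lra. rewrite Heq.
      rewrite (sum_eq _ (fun _ => 0)). rewrite sum_cte. ring.
      intros i Hi. rewrite H0. ring. lia.
Qed.

Lemma taylor g m s x : smooth g -> (forall k, (k < m)%nat -> Derive_n g k s = 0) ->
  exists z, Rabs (z - s) <= Rabs (x - s) /\
    g x = (x - s) ^ m / INR (Factorial.fact m) * Derive_n g m z.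
Proof.
  intros Hs H0. destruct (Rtotal_order s x) as [Hlt|[Heq|Hgt]].
  - destruct (taylor_pos g m s x Hs H0 Hlt) as [z [Hz E]]. exists z. split; auto.
    rewrite !Rabs_right; lra.
  - subst x. exists s. split. lra. destruct m as [|m].
    + simpl. field.
    + change (g s) with (Derive_n g 0 s). rewrite H0 by lia. replace (s - s) with 0 by ring. rewrite pow_i by lia. unfold Rdiv. ring.
  - set (h := fun y => g (- y)).
    assert (Hh : smooth h) by (apply smooth_opp; auto).
    assert (Dh : forall k y, Derive_n h k y = (-1) ^ k * Derive_n g k (- y)).
    { intros k y. apply Derive_n_comp_opp. apply filter_forall. intros t j _. apply smooth_exn; auto. }
    destruct (taylor_pos h m (- s) (- x) Hh) as [z [Hz E]].
    + intros k Hk. rewrite Dh, Ropp_involutive, H0; auto. ring.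
    + lra.
    + exists (- z). split. rewrite !Rabs_left; lra.
      unfold h in E. rewrite Ropp_involutive in E. rewrite E, Dh.
      replace (x - s) with ((- x - - s) * (-1)) by ring. rewrite Rpow_mult_distr. field.
      apply not_0_INR. apply Factorial.fact_neq_0.
Qed.

Definition Af (f : R -> R) x := atan (Derive_n f 1 x / f x).

Lemma deriv_A f x : smooth f -> f x <> 0 ->
  is_derive (fun y => - Af f y) x (zero_count_integrand f x).
Proof.
  intros Hs Hf.
  assert (H1 : is_derive (fun y => Derive_n f 1 y / f y) x
    ((Derive_n f 2 x * f x - Derive_n f 1 x * Derive_n f 1 x) / f x ^ 2)).
  { apply is_derive_div; [apply smooth_deriv; auto | apply (smooth_deriv f 0); auto | auto]. }
  pose proof (is_derive_comp atan _ x _ _ (is_derive_atan _) H1) as H2.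
  pose proof (is_derive_opp _ _ _ H2) as H3.
  unfold Af.
  replace (zero_count_integrand f x) with
    (opp (scal ((Derive_n f 2 x * f x - Derive_n f 1 x * Derive_n f 1 x) / f x ^ 2)
       (/ (1 + (Derive_n f 1 x / f x)²)))).
  exact H3.
  unfold zero_count_integrand, opp, scal; simpl; unfold mult; simpl.
  unfold Rsqr.
  assert (0 < f x * f x) by (apply Rsqr_pos_lt; auto).
  assert (0 <= Derive_n f 1 x * Derive_n f 1 x) by apply Rle_0_sqr.
  field. split; [|auto]. nra.
Qed.

Lemma cont_sq g x : continuity_pt g x -> continuity_pt (fun y => g y ^ 2) x.
Proof.
  intros H. apply continuity_pt_ext with (f := (g * g)%F).
  intros; unfold mult_fct; simpl; ring. apply continuity_pt_mult; auto.
Qed.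

Lemma cont_I f x : smooth f -> f x ^ 2 + Derive_n f 1 x ^ 2 <> 0 ->
  continuity_pt (zero_count_integrand f) x.
Proof.
  intros Hs Hd. unfold zero_count_integrand.
  apply (continuity_pt_div (fun y => Derive_n f 1 y ^ 2 - f y * Derive_n f 2 y)
     (fun y => f y ^ 2 + Derive_n f 1 y ^ 2)); auto.
  - apply (continuity_pt_minus (fun y => Derive_n f 1 y ^ 2) (fun y => f y * Derive_n f 2 y)).
    apply cont_sq, smooth_cont; auto.
    apply (continuity_pt_mult f (Derive_n f 2)). apply (smooth_cont f 0); auto. apply smooth_cont; auto.
  - apply (continuity_pt_plus (fun y => f y ^ 2) (fun y => Derive_n f 1 y ^ 2)).
    apply cont_sq, (smooth_cont f 0); auto. apply cont_sq, smooth_cont; auto.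
Qed.

Lemma cont_of_pt g x : continuity_pt g x -> continuous g x.
Proof. intros H. apply (proj1 (continuity_pt_filterlim g x) H). Qed.

Lemma RInt_nonzero f u v : smooth f -> u <= v -> (forall x, u <= x <= v -> f x <> 0) ->
  is_RInt (zero_count_integrand f) u v (Af f u - Af f v).
Proof.
  intros Hs Huv Hnz.
  replace (Af f u - Af f v) with (minus (- Af f v) (- Af f u)).
  2:{ unfold minus, plus, opp; simpl. ring. }
  apply (is_RInt_derive (fun y => - Af f y)).
  - intros x Hx. rewrite Rmin_left, Rmax_right in Hx by lra. apply deriv_A; auto.
  - intros x Hx. rewrite Rmin_left, Rmax_right in Hx by lra. apply cont_of_pt, cont_I; auto.
    assert (0 < f x ^ 2). { apply pow2_gt_0. auto. }
    assert (0 <= Derive_n f 1 x ^ 2) by apply pow2_ge_0. lra.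
Qed.

Definition Pab f u v := ex_RInt (zero_count_integrand f) u v /\
  exists zs : list R, NoDup zs /\ (forall x, In x zs <-> (u <= x <= v /\ f x = 0)) /\
    INR (length zs) = / PI * (Af f v - Af f u + RInt (zero_count_integrand f) u v).

Lemma P_nonzero f u v : smooth f -> u <= v -> (forall x, u <= x <= v -> f x <> 0) -> Pab f u v.
Proof.
  intros Hs Huv Hnz. pose proof (RInt_nonzero f u v Hs Huv Hnz) as H.
  split. eexists; eauto.
  exists nil. split. constructor. split.
  - intros x; split; simpl; [tauto|]. intros [Hx Hfx]. apply (Hnz x Hx Hfx).
  - rewrite (is_RInt_unique _ _ _ _ H). simpl. ring.
Qed.

Lemma P_add f u w v : u <= w -> w <= v -> f w <> 0 -> Pab f u w -> Pab f w v -> Pab f u v.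
Proof.
  intros H1 H2 Hw [E1 [z1 [N1 [C1 L1]]]] [E2 [z2 [N2 [C2 L2]]]].
  split. apply (ex_RInt_Chasles _ u w v); auto.
  exists (z1 ++ z2). split; [|split].
  - apply NoDup_app; auto. intros a Ha Hb. apply C1 in Ha. apply C2 in Hb.
    assert (a = w) by lra. subst. tauto.
  - intros x. rewrite in_app_iff, C1, C2. split.
    + intros [[? ?]|[? ?]]; split; auto; lra.
    + intros [Hx Hfx]. destruct (Rle_or_lt x w); [left|right]; split; auto; lra.
  - rewrite length_app, plus_INR, L1, L2.
    rewrite <- (RInt_Chasles _ u w v); auto. unfold plus; simpl. ring.
Qed.

Definition local_good f s := exists d, 0 < d /\
  (forall x, 0 < Rabs (x - s) < d -> f x <> 0) /\
  (forall u v, s - d < u -> u <= v -> v < s + d -> f u <> 0 -> f v <> 0 -> Pab f u v).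

Lemma sweep f a b : a <= b -> f a <> 0 -> f b <> 0 -> (forall s, local_good f s) -> Pab f a b.
Proof.
  intros Hab Ha Hb Hloc.
  set (E := fun x => a <= x <= b /\ forall y, a <= y <= x -> f y <> 0 -> Pab f a y).
  assert (Paa : Pab f a a).
  { destruct (Hloc a) as [d [Hd [_ HP]]]. apply HP; auto; lra. }
  assert (Ea : E a). { split. lra. intros y Hy _. replace y with a by lra. auto. }
  assert (Hbd : bound E). { exists b. intros x [Hx _]. lra. }
  destruct (completeness E Hbd (ex_intro _ a Ea)) as [m [Hub Hlub]].
  assert (Ham : a <= m) by (apply Hub; auto).
  assert (Hmb : m <= b). { apply Hlub. intros x [Hx _]. lra. }
  destruct (Hloc m) as [d [Hd [Hnz HP]]].
  assert (Hx : exists x, E x /\ m - d < x).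
  { apply NNPP. intro Hn. assert (m <= m - d); [|lra].
    apply Hlub. intros x Ex. destruct (Rle_or_lt x (m - d)); auto.
    exfalso. apply Hn. exists x; auto. }
  destruct Hx as [x [[Hx1 Hx2] Hxm]].
  assert (Hxm' : x <= m) by (apply Hub; split; auto).
  set (y0 := Rmin (m + d / 2) b).
  assert (Hy0 : E y0).
  { split. unfold y0. split. apply Rmin_glb; lra. apply Rmin_r.
    intros y Hy Hfy. destruct (Rle_or_lt y x) as [Hyx|Hyx].
    - apply Hx2; auto; lra.
    - assert (Hy0' : y0 <= m + d / 2) by apply Rmin_l.
      assert (Hw : exists w, a <= w <= x /\ m - d < w /\ f w <> 0).
      { destruct (Req_dec (f x) 0) as [Hfx|Hfx].
        - assert (Hax : a < x). { destruct (Req_dec a x); [subst; tauto | lra]. }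
          exists ((Rmax a (m - d) + x) / 2).
          assert (a <= Rmax a (m - d)) by apply Rmax_l.
          assert (m - d <= Rmax a (m - d)) by apply Rmax_r.
          assert (Rmax a (m - d) < x) by (apply Rmax_lub_lt; lra).
          split. lra. split. lra. apply Hnz. rewrite Rabs_left; lra.
        - exists x. split. lra. auto. }
      destruct Hw as [w [Hw1 [Hw2 Hw3]]].
      apply (P_add f a w y); try lra; auto.
      apply HP; auto; lra. }
  destruct (Rle_or_lt b (m + d / 2)) as [Hc|Hc].
  - assert (y0 = b) by (unfold y0; apply Rmin_right; lra).
    destruct Hy0 as [_ HH]. apply HH; auto. lra.
  - assert (y0 = m + d / 2) by (unfold y0; apply Rmin_left; lra).
    assert (y0 <= m) by (apply Hub; auto). lra.
Qed.

Lemma cont_eps g x : continuous g x -> forall eps, 0 < eps ->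
  exists d, 0 < d /\ forall y, Rabs (y - x) < d -> Rabs (g y - g x) < eps.
Proof.
  intros Hc eps Heps.
  assert (H := proj2 (continuity_pt_filterlim g x) Hc).
  destruct (proj1 (continuity_pt_locally g x) H (mkposreal eps Heps)) as [d Hd].
  exists d. split. apply cond_pos. intros y Hy. apply Hd. exact Hy.
Qed.

Lemma eps_eq a b : (forall eps, 0 < eps -> Rabs (a - b) < eps) -> a = b.
Proof.
  intros H. destruct (Req_dec (a - b) 0). lra.
  assert (0 < Rabs (a - b)) by (apply Rabs_pos_lt; auto).
  specialize (H _ H1). lra.
Qed.

Lemma nonzero_nbhd g x : continuity_pt g x -> g x <> 0 ->
  exists d, 0 < d /\ forall y, Rabs (y - x) < d -> g y <> 0.
Proof.
  intros Hc Hg. destruct (cont_eps g x (proj1 (continuity_pt_filterlim g x) Hc) (Rabs (g x)))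
    as [d [Hd H]]. apply Rabs_pos_lt; auto.
  exists d. split; auto. intros y Hy Hgy. specialize (H y Hy). rewrite Hgy in H.
  rewrite Rminus_0_l, Rabs_Ropp in H. lra.
Qed.

Lemma local_nonzero f s : smooth f -> f s <> 0 -> local_good f s.
Proof.
  intros Hs Hf. destruct (nonzero_nbhd f s (smooth_cont f 0 s Hs) Hf) as [d [Hd H]].
  exists d. split; auto. split.
  - intros x Hx. apply H. lra.
  - intros u v Hu Huv Hv _ _. apply P_nonzero; auto. intros x Hx. apply H.
    apply Rabs_def1; lra.
Qed.

Lemma RInt_correct_R (g : R -> R) a b : ex_RInt g a b -> is_RInt g a b (RInt g a b).
Proof. intros H. exact (RInt_correct g a b H). Qed.

Lemma piece_zero f s u v G : smooth f -> u < s -> s < v -> f s = 0 ->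
  (forall x, u <= x <= v -> x <> s -> f x <> 0) ->
  (forall x, x <> s -> G x = zero_count_integrand f x) -> continuous G s ->
  (forall eps, 0 < eps -> exists e, 0 < e /\ forall x, s < x < s + e -> Rabs (Af f x - PI/2) < eps) ->
  (forall eps, 0 < eps -> exists e, 0 < e /\ forall x, s - e < x < s -> Rabs (Af f x + PI/2) < eps) ->
  Pab f u v.
Proof.
  intros Hs Hus Hsv Hfs Hnz HG HGc HR HL.
  set (I := zero_count_integrand f).
  assert (Gc : forall x, u <= x <= v -> continuous G x).
  { intros x Hx. destruct (Req_dec x s) as [->|Hxs]; auto.
    apply continuous_ext_loc with (g := I).
    - assert (0 < Rabs (x - s)) by (apply Rabs_pos_lt; lra).
      exists (mkposreal _ H). intros y Hy. change (Rabs (y - x) < Rabs (x - s)) in Hy.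
      symmetry. apply HG. intros ->. rewrite Rabs_minus_sym in Hy. lra.
    - apply cont_of_pt, cont_I; auto.
      assert (0 < f x ^ 2) by (apply pow2_gt_0; auto).
      assert (0 <= Derive_n f 1 x ^ 2) by apply pow2_ge_0. lra. }
  assert (Gi : forall a b, u <= a -> a <= b -> b <= v -> ex_RInt G a b).
  { intros a b Ha Hab Hb. apply (ex_RInt_continuous (V := R_CompleteNormedModule)). intros z Hz.
    rewrite Rmin_left, Rmax_right in Hz by lra. apply Gc. lra. }
  set (Phi := fun z => RInt G u z).
  assert (Phic : continuous Phi s).
  { apply (continuous_RInt_1 G u s Phi).
    exists (mkposreal (Rmin (s - u) (v - s)) ltac:(apply Rmin_glb_lt; lra)).
    intros y Hy. change (Rabs (y - s) < Rmin (s - u) (v - s)) in Hy.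
    assert (Rmin (s - u) (v - s) <= s - u) by apply Rmin_l.
    assert (Rmin (s - u) (v - s) <= v - s) by apply Rmin_r.
    apply Rabs_def2 in Hy. unfold Phi. apply RInt_correct_R. apply Gi; lra. }
  assert (PhiL : forall x, u <= x < s -> Phi x = Af f u - Af f x).
  { intros x Hx. apply is_RInt_unique. apply is_RInt_ext with (f := I).
    - intros y Hy. rewrite Rmin_left, Rmax_right in Hy by lra. symmetry. apply HG. lra.
    - apply RInt_nonzero; auto. lra. intros y Hy. apply Hnz; lra. }
  assert (PhiR : forall y, s < y <= v -> Phi v - Phi y = Af f y - Af f v).
  { intros y Hy. unfold Phi.
    assert (E : @RInt R_CompleteNormedModule G u y + RInt G y v = RInt G u v).
    { apply (RInt_Chasles G u y v); apply Gi; lra. }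
    assert (E2 : @RInt R_CompleteNormedModule G y v = Af f y - Af f v).
    { apply is_RInt_unique. apply is_RInt_ext with (f := I).
      - intros z Hz. rewrite Rmin_left, Rmax_right in Hz by lra. symmetry. apply HG. lra.
      - apply RInt_nonzero; auto. lra. intros z Hz. apply Hnz; lra. }
    simpl in *. lra. }
  assert (Ps : Phi s = Af f u + PI / 2).
  { apply eps_eq. intros eps Heps.
    destruct (cont_eps Phi s Phic (eps/2)) as [d [Hd Hc]]. lra.
    destruct (HL (eps/2)) as [e [He He2]]. lra.
    set (x := s - Rmin (Rmin d e) (s - u) / 2).
    assert (Rmin (Rmin d e) (s - u) <= Rmin d e) by apply Rmin_l.
    assert (Rmin (Rmin d e) (s - u) <= s - u) by apply Rmin_r.
    assert (Rmin d e <= d) by apply Rmin_l.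
    assert (Rmin d e <= e) by apply Rmin_r.
    assert (0 < Rmin (Rmin d e) (s - u)) by (repeat apply Rmin_glb_lt; lra).
    specialize (Hc x). specialize (He2 x).
    rewrite PhiL in Hc by (unfold x; lra).
    assert (Rabs (x - s) < d) by (unfold x; apply Rabs_def1; lra).
    specialize (Hc H4). specialize (He2 ltac:(unfold x; lra)).
    apply Rabs_def2 in Hc. apply Rabs_def2 in He2. apply Rabs_def1; lra. }
  assert (Pv : Phi v = Phi s + PI / 2 - Af f v).
  { apply eps_eq. intros eps Heps.
    destruct (cont_eps Phi s Phic (eps/2)) as [d [Hd Hc]]. lra.
    destruct (HR (eps/2)) as [e [He He2]]. lra.
    set (x := s + Rmin (Rmin d e) (v - s) / 2).
    assert (Rmin (Rmin d e) (v - s) <= Rmin d e) by apply Rmin_l.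
    assert (Rmin (Rmin d e) (v - s) <= v - s) by apply Rmin_r.
    assert (Rmin d e <= d) by apply Rmin_l.
    assert (Rmin d e <= e) by apply Rmin_r.
    assert (0 < Rmin (Rmin d e) (v - s)) by (repeat apply Rmin_glb_lt; lra).
    specialize (Hc x). specialize (He2 x).
    assert (Hx := PhiR x ltac:(unfold x; lra)).
    assert (Rabs (x - s) < d) by (unfold x; apply Rabs_def1; lra).
    specialize (Hc H4). specialize (He2 ltac:(unfold x; lra)).
    apply Rabs_def2 in Hc. apply Rabs_def2 in He2. apply Rabs_def1; lra. }
  assert (HI : is_RInt I u v (Af f u - Af f v + PI)).
  { assert (H1 : is_RInt I u s (Phi s)).
    { apply is_RInt_ext with (f := G).
      + intros z Hz. rewrite Rmin_left, Rmax_right in Hz by lra. apply HG. lra.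
      + apply RInt_correct_R, Gi; lra. }
    assert (H2 : is_RInt I s v (Phi v - Phi s)).
    { apply is_RInt_ext with (f := G).
      + intros z Hz. rewrite Rmin_left, Rmax_right in Hz by lra. apply HG. lra.
      + replace (Phi v - Phi s) with (RInt G s v). apply RInt_correct_R, Gi; lra.
        unfold Phi.
        assert (E : @RInt R_CompleteNormedModule G u s + RInt G s v = RInt G u v).
        { apply (RInt_Chasles G u s v); apply Gi; lra. }
        simpl in *. lra. }
    pose proof (is_RInt_Chasles I u s v _ _ H1 H2) as H3.
    replace (Af f u - Af f v + PI) with (Phi s + (Phi v - Phi s)).
    exact H3. rewrite Pv, Ps. field. }
  split. eexists; exact HI.
  exists (s :: nil). split; [|split].
  - constructor. simpl; tauto. constructor.
  - intros x. simpl. split.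
    + intros [<-|[]]. split; auto; lra.
    + intros [Hx Hfx]. left. destruct (Req_dec x s); auto. exfalso; apply (Hnz x); auto.
  - assert (E : RInt (zero_count_integrand f) u v = Af f u - Af f v + PI)
      by (apply is_RInt_unique; exact HI).
    rewrite E. simpl. field. apply PI_neq0.
Qed.

Lemma least_nat (P : nat -> Prop) : (exists n, P n) -> exists n, P n /\ forall k, (k < n)%nat -> ~ P k.
Proof.
  intros [n Hn]. revert Hn. induction n as [n IH] using (well_founded_induction Wf_nat.lt_wf).
  intros Hn. destruct (classic (exists k, (k < n)%nat /\ P k)) as [[k [Hk Pk]]|Hno].
  - apply (IH k Hk Pk).
  - exists n. split; auto. intros k Hk Pk. apply Hno; eauto.
Qed.

Lemma atan_big eps : 0 < eps -> exists M, 0 < M /\ forall y, M < y -> Rabs (atan y - PI / 2) < eps.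
Proof.
  intros He. set (e := Rmin eps (PI / 4)).
  assert (e <= eps) by apply Rmin_l. assert (e <= PI/4) by apply Rmin_r.
  assert (0 < e) by (apply Rmin_glb_lt; auto; pose proof PI_RGT_0; lra).
  pose proof PI_RGT_0.
  exists (tan (PI / 2 - e)). split. apply tan_gt_0; lra.
  intros y Hy. apply atan_increasing in Hy. rewrite atan_tan in Hy by lra.
  pose proof (atan_bound y). rewrite Rabs_left; lra.
Qed.

Lemma atan_small eps : 0 < eps -> exists M, 0 < M /\ forall y, y < - M -> Rabs (atan y + PI / 2) < eps.
Proof.
  intros He. destruct (atan_big eps He) as [M [HM H]]. exists M. split; auto.
  intros y Hy. specialize (H (- y) ltac:(lra)). rewrite atan_opp in H.
  replace (atan y + PI / 2) with (- (- atan y - PI / 2)) by ring. rewrite Rabs_Ropp. auto.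
Qed.

Lemma ratio_lemma c F0 F1 : c <> 0 -> Rabs (F0 - c) < Rabs c / 2 -> Rabs (F1 - c) < Rabs c / 2 ->
  F0 <> 0 /\ F1 <> 0 /\ 1 / 3 <= F1 / F0.
Proof.
  intros Hc H0 H1. apply Rabs_def2 in H0. apply Rabs_def2 in H1.
  destruct (Rlt_or_le 0 c) as [Hp|Hn].
  - rewrite Rabs_right in H0, H1 by lra.
    assert (F0 > 0) by lra. split; [lra|split; [lra|]].
    set (q := F1 / F0). assert (F1 = q * F0) by (unfold q; field; lra). nra.
  - assert (c < 0) by lra. rewrite Rabs_left in H0, H1 by lra.
    assert (F0 < 0) by lra. split; [lra|split; [lra|]].
    set (q := F1 / F0). assert (F1 = q * F0) by (unfold q; field; lra). nra.
Qed.

Lemma lim_mult f g x (a b : R) : is_lim f x a -> is_lim g x b -> is_lim (fun y => f y * g y) x (a * b).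
Proof. intros H1 H2. exact (is_lim_mult f g x a b H1 H2 I). Qed.
Lemma lim_plus f g x (a b : R) : is_lim f x a -> is_lim g x b -> is_lim (fun y => f y + g y) x (a + b).
Proof. intros H1 H2. apply (is_lim_plus f g x a b); auto. reflexivity. Qed.
Lemma lim_minus f g x (a b : R) : is_lim f x a -> is_lim g x b -> is_lim (fun y => f y - g y) x (a - b).
Proof. intros H1 H2. apply (is_lim_minus f g x a b); auto. reflexivity. Qed.
Lemma lim_div f g x (a b : R) : is_lim f x a -> is_lim g x b -> b <> 0 -> is_lim (fun y => f y / g y) x (a / b).
Proof. intros H1 H2 Hb. apply (is_lim_div f g x a b H1 H2). intros E; injection E; auto. exact I. Qed.

Lemma choose_fun (P : R -> R -> Prop) : (forall x, exists z, P x z) -> exists Z : R -> R, forall x, P x (Z x).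
Proof.
  intros H. exists (fun x => proj1_sig (constructive_indefinite_description _ (H x))).
  intros x. exact (proj2_sig (constructive_indefinite_description _ (H x))).
Qed.

Lemma lim_comp_Z (g : R -> R) s (Z : R -> R) : continuity_pt g s ->
  (forall x, Rabs (Z x - s) <= Rabs (x - s)) -> is_lim (fun x => g (Z x)) s (g s).
Proof.
  intros Hc HZ. apply is_lim_spec. intros eps. simpl.
  destruct (cont_eps g s (cont_of_pt _ _ Hc) eps (cond_pos eps)) as [d [Hd H]].
  exists (mkposreal d Hd). intros y Hy _. change (Rabs (y - s) < d) in Hy.
  apply H. specialize (HZ y). lra.
Qed.

Lemma neq_of_close c F : c <> 0 -> Rabs (F - c) < Rabs c / 2 -> F <> 0.
Proof. intros Hc H E. rewrite E, Rminus_0_l, Rabs_Ropp in H. pose proof (Rabs_pos c). lra. Qed.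

Lemma alg t T p0 p1 p2 : t * T <> 0 -> t * t * (p0 * p0) + p1 * p1 <> 0 ->
  ((t * T * p1) ^ 2 - t * t * T * p0 * (T * p2)) / ((t * t * T * p0) ^ 2 + (t * T * p1) ^ 2)
  = (p1 * p1 - p0 * p2) / (t * t * (p0 * p0) + p1 * p1).
Proof.
  intros H1 H2.
  replace ((t * T * p1) ^ 2 - t * t * T * p0 * (T * p2)) with ((t * T) ^ 2 * (p1 * p1 - p0 * p2)) by ring.
  replace ((t * t * T * p0) ^ 2 + (t * T * p1) ^ 2) with ((t * T) ^ 2 * (t * t * (p0 * p0) + p1 * p1)) by ring.
  assert ((t * T) ^ 2 <> 0) by (apply pow_nonzero; auto).
  field. split; auto. split; intro E; apply H1; rewrite E; ring.
Qed.

Lemma local_zero f s : smooth f -> no_flat_zero f -> f s = 0 -> local_good f s.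
Proof.
  intros Hs Hnf Hfs.
  destruct (least_nat (fun r => Derive_n f r s <> 0) (Hnf s Hfs)) as [n [Hn Hmin]].
  assert (Hz : forall k, (k < n)%nat -> Derive_n f k s = 0).
  { intros k Hk. apply NNPP. apply Hmin; auto. }
  destruct n as [|r]. { simpl in Hn. contradiction. }
  set (c := Derive_n f (S r) s) in *.
  assert (Hcpos : 0 < Rabs c) by (apply Rabs_pos_lt; auto).
  destruct (cont_eps (Derive_n f (S r)) s (cont_of_pt _ _ (smooth_cont f (S r) s Hs)) (Rabs c / 2))
    as [d0 [Hd0 Hc0]]. lra.
  fold c in Hc0.
  assert (T0 : forall x, exists z, Rabs (z - s) <= Rabs (x - s) /\
     f x = (x - s) ^ (S r) / INR (Factorial.fact (S r)) * Derive_n f (S r) z).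
  { intros x. apply (taylor f (S r) s x Hs Hz). }
  assert (T1 : forall x, exists z, Rabs (z - s) <= Rabs (x - s) /\
     Derive_n f 1 x = (x - s) ^ r / INR (Factorial.fact r) * Derive_n f (S r) z).
  { intros x. destruct (taylor (Derive_n f 1) r s x (smooth_Dn f 1 Hs)) as [z [Hz1 Hz2]].
    - intros k Hk. rewrite Derive_n_comp. apply Hz. lia.
    - exists z. split; auto. rewrite Hz2, Derive_n_comp. rewrite Nat.add_1_r. reflexivity. }
  assert (Key : forall x, 0 < Rabs (x - s) < d0 -> f x <> 0 /\ 1/3 <= (x - s) * (Derive_n f 1 x / f x)).
  { intros x Hx. destruct (T0 x) as [z0 [Hz0 E0]]. destruct (T1 x) as [z1 [Hz1 E1]].
    destruct (ratio_lemma c (Derive_n f (S r) z0) (Derive_n f (S r) z1)) as [N0 [N1 Q]]; auto.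
    apply Hc0; lra. apply Hc0; lra.
    assert (Ht : x - s <> 0). { intros E. rewrite E, Rabs_R0 in Hx. lra. }
    assert (Htr : (x - s) ^ r <> 0) by (apply pow_nonzero; auto).
    assert (Hfr : INR (Factorial.fact r) <> 0) by (apply not_0_INR, Factorial.fact_neq_0).
    assert (Hsr : INR (S r) <> 0) by (apply not_0_INR; lia).
    assert (Hfx : f x <> 0).
    { rewrite E0. change (Factorial.fact (S r)) with (S r * Factorial.fact r)%nat.
      rewrite mult_INR. simpl pow.
      replace ((x - s) * (x - s) ^ r / (INR (S r) * INR (Factorial.fact r)) * Derive_n f (S r) z0)
        with ((x - s) * (x - s) ^ r * Derive_n f (S r) z0 / (INR (S r) * INR (Factorial.fact r)))
        by (field; auto).
      unfold Rdiv. apply Rmult_integral_contrapositive; split.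
      repeat apply Rmult_integral_contrapositive; repeat split; auto.
      apply Rinv_neq_0_compat, Rmult_integral_contrapositive; auto. }
    split; auto.
    replace ((x - s) * (Derive_n f 1 x / f x)) with (INR (S r) * (Derive_n f (S r) z1 / Derive_n f (S r) z0)).
    - assert (1 <= INR (S r)). { rewrite S_INR. pose proof (pos_INR r). lra. }
      assert (0 <= Derive_n f (S r) z1 / Derive_n f (S r) z0) by lra. nra.
    - rewrite E0, E1. simpl pow. change (Factorial.fact (S r)) with (S r * Factorial.fact r)%nat.
      rewrite mult_INR. field. repeat split; auto. }
  assert (HR : forall eps, 0 < eps -> exists e, 0 < e /\ forall x, s < x < s + e -> Rabs (Af f x - PI/2) < eps).
  { intros eps He. destruct (atan_big eps He) as [M [HM HM2]].
    assert (0 < 1 / (3 * M)) by (apply Rdiv_lt_0_compat; lra).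
    exists (Rmin d0 (1 / (3 * M))). split. apply Rmin_glb_lt; auto.
    intros x Hx. assert (Rmin d0 (1/(3*M)) <= d0) by apply Rmin_l.
    assert (Rmin d0 (1/(3*M)) <= 1/(3*M)) by apply Rmin_r.
    destruct (Key x) as [_ K]. rewrite Rabs_right; lra.
    unfold Af. apply HM2.
    set (y := Derive_n f 1 x / f x) in *.
    assert (H3 : x - s < 1/(3*M)) by lra.
    apply Rmult_lt_compat_r with (r := 3*M) in H3; [|lra].
    replace (1/(3*M)*(3*M)) with 1 in H3 by (field; lra).
    nra. }
  assert (HL : forall eps, 0 < eps -> exists e, 0 < e /\ forall x, s - e < x < s -> Rabs (Af f x + PI/2) < eps).
  { intros eps He. destruct (atan_small eps He) as [M [HM HM2]].
    assert (0 < 1 / (3 * M)) by (apply Rdiv_lt_0_compat; lra).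
    exists (Rmin d0 (1 / (3 * M))). split. apply Rmin_glb_lt; auto.
    intros x Hx. assert (Rmin d0 (1/(3*M)) <= d0) by apply Rmin_l.
    assert (Rmin d0 (1/(3*M)) <= 1/(3*M)) by apply Rmin_r.
    destruct (Key x) as [_ K]. rewrite Rabs_left; lra.
    unfold Af. apply HM2.
    set (y := Derive_n f 1 x / f x) in *.
    assert (H3 : s - x < 1/(3*M)) by lra.
    apply Rmult_lt_compat_r with (r := 3*M) in H3; [|lra].
    replace (1/(3*M)*(3*M)) with 1 in H3 by (field; lra).
    nra. }
  assert (HGc : exists G, (forall x, x <> s -> G x = zero_count_integrand f x) /\ continuous G s).
  { destruct r as [|q].
    - exists (zero_count_integrand f). split; auto. apply cont_of_pt, cont_I; auto.
      rewrite Hfs. assert (0 < Derive_n f 1 s ^ 2) by (apply pow2_gt_0; auto).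
      replace (0 ^ 2) with 0 by ring. lra.
    - assert (T2 : forall x, exists z, Rabs (z - s) <= Rabs (x - s) /\
        Derive_n f 2 x = (x - s) ^ q / INR (Factorial.fact q) * Derive_n f (S (S q)) z).
      { intros x. destruct (taylor (Derive_n f 2) q s x (smooth_Dn f 2 Hs)) as [z [Hz1 Hz2]].
        - intros k Hk. rewrite Derive_n_comp. apply Hz. lia.
        - exists z. split; auto. rewrite Hz2, Derive_n_comp.
          replace (q + 2)%nat with (S (S q)) by lia. reflexivity. }
      destruct (choose_fun _ T0) as [Z0 HZ0].
      destruct (choose_fun _ T1) as [Z1 HZ1].
      destruct (choose_fun _ T2) as [Z2 HZ2].
      set (n := S (S q)) in *.
      set (k0 := INR (Factorial.fact n)). set (k1 := INR (Factorial.fact (S q))).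
      set (k2 := INR (Factorial.fact q)).
      assert (Hk0 : k0 <> 0) by (apply not_0_INR, Factorial.fact_neq_0).
      assert (Hk1 : k1 <> 0) by (apply not_0_INR, Factorial.fact_neq_0).
      assert (Hk2 : k2 <> 0) by (apply not_0_INR, Factorial.fact_neq_0).
      assert (LD : forall Z k, (forall x, Rabs (Z x - s) <= Rabs (x - s)) -> k <> 0 ->
         is_lim (fun x => Derive_n f n (Z x) / k) s (c / k)).
      { intros Z k HZ Hk. apply lim_div; auto. apply (lim_comp_Z (Derive_n f n) s Z).
        apply smooth_cont; auto. auto. apply is_lim_const. }
      set (P0 := fun x => Derive_n f n (Z0 x) / k0).
      set (P1 := fun x => Derive_n f n (Z1 x) / k1).
      set (P2 := fun x => Derive_n f n (Z2 x) / k2).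
      assert (L0 : is_lim P0 s (c / k0)) by (apply (LD Z0 k0); [intros x; apply HZ0 | exact Hk0]).
      assert (L1 : is_lim P1 s (c / k1)) by (apply (LD Z1 k1); [intros x; apply HZ1 | exact Hk1]).
      assert (L2 : is_lim P2 s (c / k2)) by (apply (LD Z2 k2); [intros x; apply HZ2 | exact Hk2]).
      assert (Lt : is_lim (fun x => x - s) s (s - s)) by (apply lim_minus; [apply is_lim_id|apply is_lim_const]).
      set (Phi := fun x => (P1 x * P1 x - P0 x * P2 x) / ((x - s) * (x - s) * (P0 x * P0 x) + P1 x * P1 x)).
      set (L := (c / k1 * (c / k1) - c / k0 * (c / k2)) / ((s - s) * (s - s) * (c / k0 * (c / k0)) + c / k1 * (c / k1))).
      assert (Hden : (s - s) * (s - s) * (c / k0 * (c / k0)) + c / k1 * (c / k1) <> 0).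
      { replace (s - s) with 0 by ring. assert (c / k1 <> 0) by (unfold Rdiv; apply Rmult_integral_contrapositive; split; auto; apply Rinv_neq_0_compat; auto).
        assert (0 < c / k1 * (c / k1)) by (apply Rsqr_pos_lt; auto).
        rewrite !Rmult_0_l, Rplus_0_l. lra. }
      assert (LPhi : is_lim Phi s L).
      { exact (lim_div _ _ s _ _
          (lim_minus _ _ s _ _ (lim_mult _ _ s _ _ L1 L1) (lim_mult _ _ s _ _ L0 L2))
          (lim_plus _ _ s _ _ (lim_mult _ _ s _ _ (lim_mult _ _ s _ _ Lt Lt) (lim_mult _ _ s _ _ L0 L0))
             (lim_mult _ _ s _ _ L1 L1)) Hden). }
      assert (EPhi : forall x, 0 < Rabs (x - s) < d0 -> zero_count_integrand f x = Phi x).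
      { intros x Hx. destruct (HZ0 x) as [Hz0 E0]. destruct (HZ1 x) as [Hz1 E1].
        destruct (HZ2 x) as [Hz2 E2].
        assert (Ht : x - s <> 0). { intros E. rewrite E, Rabs_R0 in Hx. lra. }
        assert (Htq : (x - s) ^ q <> 0) by (apply pow_nonzero; auto).
        assert (N1 : Derive_n f n (Z1 x) <> 0) by (apply (neq_of_close c); auto; apply Hc0; lra).
        assert (NP1 : P1 x <> 0) by (unfold P1, Rdiv; apply Rmult_integral_contrapositive; split; auto; apply Rinv_neq_0_compat; auto).
        assert (Hd2 : (x - s) * (x - s) * (P0 x * P0 x) + P1 x * P1 x <> 0).
        { assert (0 < P1 x * P1 x) by (apply Rsqr_pos_lt; auto).
          assert (0 <= (x - s) * (x - s) * (P0 x * P0 x)).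
          { apply Rmult_le_pos; apply Rle_0_sqr. }
          lra. }
        assert (Ef : f x = (x - s) * (x - s) * (x - s) ^ q * P0 x) by (rewrite E0; unfold P0; simpl pow; fold n; fold k0; field; auto).
        assert (Ed1 : Derive_n f 1 x = (x - s) * (x - s) ^ q * P1 x) by (rewrite E1; unfold P1; simpl pow; fold n; fold k1; field; auto).
        assert (Ed2 : Derive_n f 2 x = (x - s) ^ q * P2 x) by (rewrite E2; unfold P2; fold n; fold k2; field; auto).
        unfold zero_count_integrand, Phi. rewrite Ef, Ed1, Ed2.
        assert (Ha : (x - s) * (x - s) ^ q <> 0) by (apply Rmult_integral_contrapositive; split; assumption).
        apply alg; assumption. }
      exists (fun x => if Req_EM_T x s then L else zero_count_integrand f x). split.
      + intros x Hx. destruct (Req_EM_T x s); [contradiction|reflexivity].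
      + apply cont_of_pt. apply continuity_pt_locally'. intros eps.
        apply is_lim_spec in LPhi. specialize (LPhi eps). simpl in LPhi.
        destruct LPhi as [d1 Hd1].
        exists (mkposreal (Rmin d1 d0) ltac:(apply Rmin_glb_lt; [apply cond_pos|auto])).
        intros y Hy Hys. change (Rabs (y - s) < Rmin d1 d0) in Hy.
        assert (Rmin d1 d0 <= d1) by apply Rmin_l. assert (Rmin d1 d0 <= d0) by apply Rmin_r.
        destruct (Req_EM_T y s) as [|_]; [contradiction|].
        destruct (Req_EM_T s s) as [_|]; [|congruence].
        rewrite EPhi. apply Hd1; auto. change (Rabs (y - s) < d1). lra.
        split. apply Rabs_pos_lt; lra. lra. }
  destruct HGc as [G [HG HGc]].
  exists d0. split; auto. split.
  - intros x Hx. apply Key; auto.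
  - intros u v Hu Huv Hv Hfu Hfv.
    destruct (Rlt_or_le v s) as [Hvs|Hsv].
    + apply P_nonzero; auto. intros x Hx. apply Key. rewrite Rabs_left; lra.
    + destruct (Rlt_or_le s u) as [Hsu|Hus].
      * apply P_nonzero; auto. intros x Hx. apply Key. rewrite Rabs_right; lra.
      * assert (u <> s) by (intros ->; auto). assert (v <> s) by (intros ->; auto).
        apply (piece_zero f s u v G); auto; try lra.
        intros x Hx Hxs. apply Key. split. apply Rabs_pos_lt; lra. apply Rabs_def1; lra.
Qed.

Theorem corollary3 (f : R -> R) (a b : R) :
  smooth f -> no_flat_zero f -> a < b -> f a * f b <> 0 ->
  ex_RInt (zero_count_integrand f) a b /\
  exists zs : list R,
    NoDup zs /\
    (forall x : R, In x zs <-> (a <= x <= b /\ f x = 0)) /\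
    INR (length zs) =
      / PI * (atan (Derive_n f 1 b / f b) - atan (Derive_n f 1 a / f a)
              + RInt (zero_count_integrand f) a b).
Proof.
  intros Hs Hnf Hab Hfab.
  assert (Ha : f a <> 0) by (intro E; apply Hfab; rewrite E; ring).
  assert (Hb : f b <> 0) by (intro E; apply Hfab; rewrite E; ring).
  assert (H : Pab f a b).
  { apply sweep; auto. lra. intros s. destruct (Req_dec (f s) 0) as [E|E].
    - apply local_zero; auto.
    - apply local_nonzero; auto. }
  exact H.
Qed.
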